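(* Let $B=2^{k_1}C_1\perp\cdots\perp2^{k_r}C_r\in\mathcal H_n(\mathfrak o)$ be a pre-optimal form, $B_1=2^{k_1}C_1\perp\cdots\perp2^{k_{r-1}}C_{r-1}$, $B_2=2^{k_r}C_r$, $n_1=\deg B_1$, $n_2=\deg B_2$ (so $n=n_1+n_2$), and $\mathrm{GK}(B)=(\mathrm{GK}(B)_1,\ldots,\mathrm{GK}(B)_n)$. Then: (1) $(\mathrm{GK}(B)_1,\ldots,\mathrm{GK}(B)_{n_1})\preceq\mathrm{GK}(B_1)$ in the lexicographic order; (2) if there are integers $b_{n_1+1},\ldots,b_{n_1+n_2}$ such that $(\mathrm{GK}(B_1),b_{n_1+1},\ldots,b_{n_1+n_2})\in\mathbf S(\{B\})$, then $\mathrm{GK}(B_1)=(\mathrm{GK}(B)_1,\ldots,\mathrm{GK}(B)_{n_1})$.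
   Context: Let $F$ be a finite unramified extension of $\mathbb Q_2$ with ring of integers $\mathfrak o$, $\mathrm{ord}$ the valuation with $\mathrm{ord}(2)=1$, $\mathrm{ord}(0)=+\infty$. $\mathcal H_n(\mathfrak o)$ is the set of symmetric $B=(b_{ij})\in M_n(F)$ with $b_{ii}\in\mathfrak o$, $2b_{ij}\in\mathfrak o$. $\perp$ is block-diagonal sum. For nondegenerate $B$ of degree $n$: $D_B=(-4)^{[n/2]}\det B$; $\xi_B=1,-1,0$ according as $D_B\in F^{\times2}$, $F(\sqrt{D_B})/F$ unramified quadratic, or ramified. $S_2(\mathfrak o)_e$: symmetric $2\times2$ matrices over $\mathfrak o$ with diagonal in $2\mathfrak o$; unimodular diagonal: diagonal with unit entries. GK invariant: $S(B)$ = set of non-decreasing $(a_i)\in\mathbb Z_{\ge0}^n$ with $\mathrm{ord}(b_{ii})\ge a_i$, $\mathrm{ord}(2b_{ij})\ge(a_i+a_j)/2$ ($1\le i\le j\le n$); $\mathbf S(\{B\})=\bigcup_{U\in GL_n(\mathfrak o)}S({}^tUBU)$; $\mathrm{GK}(B)$ is its greatest element for the lexicographic order $\preceq$. Pre-optimal forms: $B=2^{k_1}C_1\perp\cdots\perp2^{k_r}C_r$ with $k_i\ge0$, each $C_i$ unimodular diagonal or in $\frac12(S_2(\mathfrak o)_e\cap GL_2(\mathfrak o))$; $B^{[j]}=2^{k_1}C_1\perp\cdots\perp2^{k_j}C_j$; $\mathcal D_m=\{j:k_j=m,C_j\text{ diagonal}\}$, $\mathcal E_m=\{j:k_j=m,C_j\text{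 not diagonal}\}$. Pre-optimal means: (PO1) $\sum_{j\in\mathcal D_m}\deg C_j\le2$ and $\mathcal E_m$ is a (possibly empty) set of consecutive integers, for each $m$; (PO2) for $i<j$: $i\in\mathcal D_{m_1},j\in\mathcal D_{m_2}\Rightarrow m_1\le m_2$; $i\in\mathcal E_{m_1},j\in\mathcal E_{m_2}\Rightarrow m_1\le m_2$; $i\in\mathcal D_{m_1},j\in\mathcal E_{m_2}\Rightarrow m_1\le m_2-1$; $i\in\mathcal E_{m_1},j\in\mathcal D_{m_2}\Rightarrow m_1\le m_2+1$; (PO3) if $C_i$ is unimodular diagonal of degree 2 then $i\ge2$ and either ($\deg B^{[i]}$ even and $\xi_{B^{[i-1]}}=\xi_{B^{[i]}}=0$) or ($\deg B^{[i-1]}$ odd and $\mathrm{ord}\det B^{[i-1]}+k_i$ even); (PO4) if $k_i=k_{i-1}-1$, $C_i$ diagonal, $C_{i-1}$ not diagonal, then $\deg C_i=2$, or $\deg C_i=1$ and either ($\deg B^{[i]}$ and $\mathrm{ord}\det B^{[i]}$ even) or ($\deg B^{[i]}$ odd and $\xi_{B^{[i-1]}}=0$); (PO5) if $C_i$ diagonal, $C_{i+1}$ not diagonal, $k_i=k_{i+1}-1$, then $\deg C_i=1$ and either ($\deg B^{[i]}$ even and $\mathrm{ord}\det B^{[i]}$ odd) or ($\deg B^{[i]}$ odd and $\xi_{B^{[i-1]}}\ne0$ if $i\ge2$); (PO6) if $\deg B^{[i]}$ even, $C_i,C_{i+1}$ unimodular diagonal, $k_{i+1}=k_i+1$, then $\xi_{B^{[i]}}=0$.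 *)

(* Defs.v *)
From HB Require Import structures.
From mathcomp Require Import all_boot all_order all_algebra.
From Stdlib Require Import ClassicalEpsilon.
Set Implicit Arguments. Unset Strict Implicit. Unset Printing Implicit Defensive.
Import Order.TTheory GRing.Theory Num.Theory.
Local Open Scope ring_scope.

Section Dyadic.
Variables (F : fieldType) (v : F -> int).

(* ord x >= m, with ord 0 = +oo *)
Definition ordge (x : F) (m : int) : bool := (x == 0) || (m <= v x).
(* 2 * ord x >= m  (used for ord x >= m/2) *)
Definition ordge2 (x : F) (m : int) : bool := (x == 0) || (m <= 2 * v x).

Definition inO (x : F) : bool := ordge x 0.
Definition isunit (x : F) : bool := (x != 0) && (v x == 0).

(* F is a complete discretely valued field with valuation v (v(2)=1, so it is
   unramified over Q_2 and of characteristic 0) and finite residue field: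
   i.e. F is a finite unramified extension of Q_2 with normalized valuation v. *)
Record dyadic_field : Prop := {
  v_mul : forall x y, x != 0 -> y != 0 -> v (x * y) = v x + v y;
  v_add : forall x y, x != 0 -> y != 0 -> x + y != 0 ->
            (v x <= v (x + y)) || (v y <= v (x + y));
  v_two : v 2 = 1;
  v_complete : forall u : nat -> F,
     (forall m : int, exists N, forall i j, (N <= i)%N -> (N <= j)%N -> ordge (u i - u j) m) ->
     exists l, forall m : int, exists N, forall i, (N <= i)%N -> ordge (u i - l) m;
  v_residue_finite : exists s : seq F, (forall y, y \in s -> inO y) /\
     (forall x, inO x -> exists2 y, y \in s & ordge (x - y) 1)
}.

(* BD k u  = 2^k * diag(u)            (unimodular diagonal C, u units)
   BE k a b c = 2^k * [[a, b/2],[b/2, c]]   (C in 1/2 (S_2(o)_e cap GL_2(o))) *)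
Inductive blk := BD of nat & seq F | BE of nat & F & F & F.

Definition bk (b : blk) : nat := match b with BD k _ => k | BE k _ _ _ => k end.
Definition bdeg (b : blk) : nat := match b with BD _ u => size u | BE _ _ _ _ => 2 end.
Definition isD (b : blk) : bool := if b is BD _ _ then true else false.

Definition blk_ok (b : blk) : bool :=
  match b with
  | BD _ u => (0 < size u)%N && all isunit u
  | BE _ a b c => [&& inO a, isunit b & inO c]
  end.

Definition bent (b : blk) (i j : nat) : F :=
  match b with
  | BD k u => if i == j then 2 ^+ k * nth 0 u i else 0
  | BE k a b c => 2 ^+ k * (if i == j then (if i == 0%N then a else c) else b / 2)
  end.

Fixpoint ent (bs : seq blk) (i j : nat) : F :=
  match bs with
  | [::] => 0
  | b :: bs' => let d := bdeg b in
      if (i < d)%N && (j < d)%N then bent b i j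
      else if (d <= i)%N && (d <= j)%N then ent bs' (i - d) (j - d) else 0
  end.

Definition degs (bs : seq blk) : nat := sumn (map bdeg bs).

Definition mxOf (bs : seq blk) : 'M[F]_(degs bs) := \matrix_(i, j) ent bs i j.

Definition square (D : F) : Prop := exists x, D = x * x.
(* F(sqrt D)/F unramified: the extension of v to F(sqrt D), namely
   w(a + b sqrt D) = v(a^2 - D b^2)/2, has value group Z (e = 1). *)
Definition unram (D : F) : Prop :=
  forall a b : F, (a != 0) || (b != 0) -> ~~ odd `|v (a ^+ 2 - D * b ^+ 2)|%N.
Definition xi (D : F) : int :=
  if excluded_middle_informative (square D) then 1
  else if excluded_middle_informative (unram D) then -1 else 0.
Definition DB (n : nat) (B : 'M[F]_n) : F := (-4) ^+ (n./2) * \det B.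
Definition xiB (bs : seq blk) : int := xi (DB (mxOf bs)).
Definition orddet (bs : seq blk) : int := v (\det (mxOf bs)).
Definition evenz (z : int) : bool := ~~ odd `|z|%N.

(* ---------- pre-optimal (blocks indexed 0..r-1; paper's C_{i+1} = nth i) ---------- *)
Section PO.
Variable bs : seq blk.
Let r := size bs.
Let C i := nth (BD 0 [::]) bs i.
Let k i := bk (C i).
Let inDm (m j : nat) := (j < r)%N && isD (C j) && (k j == m).
Let inEm (m j : nat) := (j < r)%N && ~~ isD (C j) && (k j == m).

Definition PO1 : Prop := forall m : nat,
  (\sum_(j < r | inDm m j) bdeg (C j) <= 2)%N /\
  (forall i j l, inEm m i -> inEm m j -> (i <= l <= j)%N -> inEm m l).

Definition PO2 : Prop := forall i j, (i < j < r)%N ->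
  [/\ isD (C i) -> isD (C j) -> (k i <= k j)%N,
      ~~ isD (C i) -> ~~ isD (C j) -> (k i <= k j)%N,
      isD (C i) -> ~~ isD (C j) -> (k i + 1 <= k j)%N &
      ~~ isD (C i) -> isD (C j) -> (k i <= k j + 1)%N].

(* paper's index i is i+1 here: B^[i] = take i.+1 bs, B^[i-1] = take i bs *)
Definition PO3 : Prop := forall i, (i < r)%N -> isD (C i) -> bdeg (C i) = 2%N ->
  (1 <= i)%N /\
  ((~~ odd (degs (take i.+1 bs)) /\ xiB (take i bs) = 0 /\ xiB (take i.+1 bs) = 0) \/
   (odd (degs (take i bs)) /\ evenz (orddet (take i bs) + (k i)%:Z))).

Definition PO4 : Prop := forall i, (1 <= i < r)%N ->
  (k i)%:Z = (k i.-1)%:Z - 1 -> isD (C i) -> ~~ isD (C i.-1) ->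
  bdeg (C i) = 2%N \/
  (bdeg (C i) = 1%N /\
   ((~~ odd (degs (take i.+1 bs)) /\ evenz (orddet (take i.+1 bs))) \/
    (odd (degs (take i.+1 bs)) /\ xiB (take i bs) = 0))).

Definition PO5 : Prop := forall i, (i.+1 < r)%N ->
  isD (C i) -> ~~ isD (C i.+1) -> (k i)%:Z = (k i.+1)%:Z - 1 ->
  bdeg (C i) = 1%N /\
  ((~~ odd (degs (take i.+1 bs)) /\ ~~ evenz (orddet (take i.+1 bs))) \/
   (odd (degs (take i.+1 bs)) /\ ((1 <= i)%N -> xiB (take i bs) <> 0))).

Definition PO6 : Prop := forall i, (i.+1 < r)%N ->
  ~~ odd (degs (take i.+1 bs)) -> isD (C i) -> isD (C i.+1) ->
  k i.+1 = (k i).+1 -> xiB (take i.+1 bs) = 0.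

Definition preoptimal : Prop :=
  all blk_ok bs /\ PO1 /\ PO2 /\ PO3 /\ PO4 /\ PO5 /\ PO6.
End PO.

Definition inS (n : nat) (B : 'M[F]_n) (a : seq nat) : Prop :=
  [/\ size a = n, sorted leq a &
      forall i j : 'I_n, (i <= j)%N ->
        ordge (B i i) (nth 0%N a i)%:Z /\
        ordge2 (2 * B i j) ((nth 0%N a i)%:Z + (nth 0%N a j)%:Z)].

Definition inGLo (n : nat) (U : 'M[F]_n) : Prop :=
  (forall i j, inO (U i j)) /\ isunit (\det U).

Definition SS (n : nat) (B : 'M[F]_n) (a : seq nat) : Prop :=
  exists U : 'M[F]_n, inGLo U /\ inS (U^T *m B *m U) a.

End Dyadic.

(* lexicographic order (for sequences of equal length) *)
Fixpoint lexle (s t : seq nat) : bool :=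
  match s, t with
  | [::], _ => true
  | x :: s', [::] => false
  | x :: s', y :: t' => (x < y)%N || ((x == y) && lexle s' t')
  end.

Definition isGK (F : fieldType) (v : F -> int) (n : nat) (B : 'M[F]_n) (g : seq nat) : Prop :=
  SS v B g /\ forall a, SS v B a -> lexle a g.

(* Main.v *)
Require Import Defs.
From mathcomp Require Import all_boot all_order all_algebra.
From mathcomp Require Import fingroup perm zify ring.
Set Implicit Arguments. Unset Strict Implicit. Unset Printing Implicit Defensive.
Import Order.TTheory GRing.Theory Num.Theory.
Local Open Scope ring_scope.

Section Val.
Variables (F : fieldType) (v : F -> int) (HF : dyadic_field v).

Lemma v1 : v 1 = 0.
Proof.
have h := v_mul HF (oner_neq0 F) (oner_neq0 F). rewrite mulr1 in h.
have h2 : v 1 + v 1 = v 1 + 0 by rewrite addr0 -h.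
exact: (addrI _ h2).
Qed.

Lemma vN1 : v (-1) = 0.
Proof.
have n1 : (-1 : F) != 0 by rewrite oppr_eq0 oner_neq0.
have h := v_mul HF n1 n1. rewrite mulN1r opprK v1 in h.
have : v (-1) *+ 2 == 0 by rewrite mulr2n -h.
by rewrite mulrn_eq0 /= => /eqP.
Qed.

Lemma vN x : x != 0 -> v (- x) = v x.
Proof.
move=> hx. have n1 : (-1 : F) != 0 by rewrite oppr_eq0 oner_neq0.
by rewrite -mulN1r (v_mul HF n1 hx) vN1 add0r.
Qed.

Lemma vV x : x != 0 -> v (x^-1) = - v x.
Proof.
move=> hx. have hi : x^-1 != 0 by rewrite invr_eq0.
have h := v_mul HF hx hi. rewrite mulfV // v1 in h.
by apply/eqP; rewrite -subr_eq0 opprK addrC -h.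
Qed.

Lemma ordge0 m : ordge v 0 m. Proof. by rewrite /ordge eqxx. Qed.
Lemma ordge1 : ordge v 1 0. Proof. by rewrite /ordge v1 lexx orbT. Qed.
Lemma ordgeN1 : ordge v (-1) 0. Proof. by rewrite /ordge vN1 lexx orbT. Qed.

Lemma ordgeW x m m' : m' <= m -> ordge v x m -> ordge v x m'.
Proof. rewrite /ordge => h /orP [h1|h2]; first by rewrite h1.
by rewrite (le_trans h h2) orbT. Qed.

Lemma ordgeD x y m : ordge v x m -> ordge v y m -> ordge v (x + y) m.
Proof.
rewrite /ordge; case: (eqVneq x 0) => [->|hx]; first by rewrite add0r => _.
case: (eqVneq y 0) => [->|hy]; first by rewrite addr0 => /= h _; rewrite h orbT.
case: (eqVneq (x + y) 0) => [->|hxy] //= h1 h2.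
by case/orP: (v_add HF hx hy hxy) => h; rewrite (le_trans _ h).
Qed.

Lemma ordgeM x y m m' : ordge v x m -> ordge v y m' -> ordge v (x * y) (m + m').
Proof.
rewrite /ordge; case: (eqVneq x 0) => [->|hx]; first by rewrite mul0r eqxx.
case: (eqVneq y 0) => [->|hy]; first by rewrite mulr0 eqxx.
rewrite /= (v_mul HF hx hy) (negbTE (mulf_neq0 hx hy)) /= => h1 h2. by rewrite lerD.
Qed.

Lemma ordgeM0 x y : ordge v x 0 -> ordge v y 0 -> ordge v (x * y) 0.
Proof. by move=> h1 h2; have := ordgeM h1 h2; rewrite addr0. Qed.

Lemma ordgeN x m : ordge v x m -> ordge v (- x) m.
Proof.
rewrite /ordge; case: (eqVneq x 0) => [->|hx]; first by rewrite oppr0 eqxx.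
by rewrite /= (vN hx) oppr_eq0 (negbTE hx).
Qed.

Lemma ordge_sum (I : Type) (r : seq I) (P : pred I) (G : I -> F) m :
  (forall i, P i -> ordge v (G i) m) -> ordge v (\sum_(i <- r | P i) G i) m.
Proof. move=> h; apply: (big_ind (fun z => ordge v z m)) => //; [exact: ordge0 | ]. move=> a b; exact: ordgeD. Qed.

Lemma ordge_prod (I : Type) (r : seq I) (P : pred I) (G : I -> F) :
  (forall i, P i -> ordge v (G i) 0) -> ordge v (\prod_(i <- r | P i) G i) 0.
Proof. move=> h; apply: (big_ind (fun z => ordge v z 0)) => //; [exact: ordge1 | move=> a b; exact: ordgeM0]. Qed.

Lemma ordge_sign (b : bool) : ordge v ((-1) ^+ b) 0.
Proof. case: b; rewrite ?expr0 ?expr1; [exact: ordgeN1 | exact: ordge1]. Qed.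

Lemma ordge2W x m m' : m' <= m -> ordge2 v x m -> ordge2 v x m'.
Proof. rewrite /ordge2 => h /orP [h1|h2]; first by rewrite h1.
by rewrite (le_trans h h2) orbT. Qed.

Lemma ordge2D x y m : ordge2 v x m -> ordge2 v y m -> ordge2 v (x + y) m.
Proof.
rewrite /ordge2; case: (eqVneq x 0) => [->|hx]; first by rewrite add0r => _.
case: (eqVneq y 0) => [->|hy]; first by rewrite addr0 => /= h _; rewrite h orbT.
case: (eqVneq (x + y) 0) => [->|hxy] //= h1 h2.
case/orP: (v_add HF hx hy hxy) => h.
  by apply: (le_trans h1); rewrite ler_pM2l.
by apply: (le_trans h2); rewrite ler_pM2l.
Qed.

Lemma ordge2M x y m m' : ordge2 v x m -> ordge v y m' -> ordge2 v (x * y) (m + 2 * m').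
Proof.
rewrite /ordge2 /ordge; case: (eqVneq x 0) => [->|hx]; first by rewrite mul0r eqxx.
case: (eqVneq y 0) => [->|hy]; first by rewrite mulr0 eqxx.
rewrite /= (v_mul HF hx hy) (negbTE (mulf_neq0 hx hy)) /= => h1 h2. rewrite mulrDr lerD //.
by rewrite ler_pM2l.
Qed.

Lemma ordge2_sum (I : Type) (r : seq I) (P : pred I) (G : I -> F) m :
  (forall i, P i -> ordge2 v (G i) m) -> ordge2 v (\sum_(i <- r | P i) G i) m.
Proof. move=> h; apply: (big_ind (fun z => ordge2 v z m)) => //; [by rewrite /ordge2 eqxx | move=> a b; exact: ordge2D]. Qed.


Definition mxO m n (A : 'M[F]_(m, n)) := forall i j, ordge v (A i j) 0.

Lemma mxO_mul m n p (A : 'M[F]_(m, n)) (B : 'M[F]_(n, p)) :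
  mxO A -> mxO B -> mxO (A *m B).
Proof. move=> hA hB i j; rewrite mxE; apply: ordge_sum => k _; exact: ordgeM0. Qed.

Lemma det_o n (A : 'M[F]_n) : mxO A -> ordge v (\det A) 0.
Proof.
move=> hA; rewrite /determinant; apply: ordge_sum => s _.
apply: ordgeM0. case: (perm.odd_perm s); rewrite ?expr0 ?expr1. exact: ordgeN1. exact: ordge1.
by apply: ordge_prod => i _.
Qed.

Lemma isunit_inv x : isunit v x -> ordge v x^-1 0.
Proof.
case/andP => hx /eqP h0; rewrite /ordge (vV hx) h0 oppr0 lexx orbT //.
Qed.

Lemma inv_o n (U : 'M[F]_n) : inGLo v U -> mxO (invmx U).
Proof.
case=> hU hd i j; have hd0 : \det U != 0 by case/andP: hd.
rewrite /invmx unitmxE unitfE hd0 !mxE.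
apply: ordgeM0; first exact: isunit_inv.
rewrite /cofactor; apply: ordgeM0.
  by rewrite -signr_odd; case: (odd _); rewrite ?expr0 ?expr1 /=; [exact: ordgeN1 | exact: ordge1].
apply: det_o; move=> a b; rewrite !mxE; exact: hU.
Qed.

Lemma isunitM x y : isunit v x -> isunit v y -> isunit v (x * y).
Proof.
case/andP=> hx /eqP vx /andP [hy /eqP vy].
by rewrite /isunit mulf_neq0 //= (v_mul HF hx hy) vx vy.
Qed.

Lemma inGLoM n (A B : 'M[F]_n) : inGLo v A -> inGLo v B -> inGLo v (A *m B).
Proof.
case=> hA dA [hB dB]; split; first exact: mxO_mul.
by rewrite det_mulmx isunitM.
Qed.

Lemma mxO_nat m n (A : 'M[F]_(m, n)) : (forall i j, exists b : bool, A i j = b%:R) -> mxO A.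
Proof. by move=> h i j; case: (h i j) => [[]] ->; [exact: ordge1 | exact: ordge0]. Qed.

Lemma inGLo1 n : inGLo v (1%:M : 'M[F]_n).
Proof.
split; first by apply: mxO_nat => i j; rewrite mxE; eexists.
by rewrite det1 /isunit oner_neq0 v1.
Qed.

Lemma inGLo_perm n (s : 'S_n) : inGLo v (perm_mx s : 'M[F]_n).
Proof.
split; first by apply: mxO_nat => i j; rewrite /perm_mx /row_perm !mxE; eexists.
rewrite det_perm /isunit; case: (perm.odd_perm s); rewrite ?expr0 ?expr1.
  by rewrite oppr_eq0 oner_neq0 vN1.
by rewrite oner_neq0 v1.
Qed.


Lemma ordge_div x y : x != 0 -> ordge v y (v x) -> ordge v (y / x) 0.
Proof.
move=> hx hy. have hi : ordge v x^-1 (- v x).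
  by rewrite /ordge (vV hx) lexx orbT.
by have := ordgeM hy hi; rewrite subrr.
Qed.

Lemma perm_mx_col m n (Y : 'M[F]_(n, m)) (sg : {perm 'I_m}) p j :
  (Y *m perm_mx sg) p j = Y p ((sg^-1)%g j).
Proof.
rewrite mxE (bigD1 ((sg^-1)%g j)) //= big1 => [|i hi].
  by rewrite /perm_mx /row_perm !mxE permKV eqxx mulr1 addr0.
rewrite /perm_mx /row_perm !mxE.
case: eqP => [h|]; last by rewrite mulr0.
by move: hi; rewrite -h permK eqxx.
Qed.

Lemma echelon m n (X : 'M[F]_(n, m)) : mxO X -> forall k : nat,
  exists V : 'M[F]_m, inGLo v V /\
    forall (p : 'I_n) (s : 'I_m), (p < k)%N -> (p < s)%N -> (X *m V) p s = 0.
Proof.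
move=> hX; elim=> [|k [V [hV hY]]].
  by exists 1%:M; split; [exact: inGLo1 | ].
set Y := X *m V in hY *.
have keep : (forall (p : 'I_n) (s : 'I_m), (p < k.+1)%N -> (p < s)%N -> Y p s = 0) ->
  exists V0 : 'M[F]_m, inGLo v V0 /\
    forall (p : 'I_n) (s : 'I_m), (p < k.+1)%N -> (p < s)%N -> (X *m V0) p s = 0.
  by move=> h; exists V.
case: (ltnP k n) => hkn; last first.
  apply: keep => p s hp hs; apply: hY => //.
  exact: (leq_trans (ltn_ord p) hkn).
case: (ltnP k m) => hkm; last first.
  apply: keep => p s hp hs; apply: hY => //.
  exact: (leq_trans hs (ltnW (leq_trans (ltn_ord s) hkm))).
pose kk := Ordinal hkn; pose kc := Ordinal hkm.
pose P := [pred s : 'I_m | (k <= s)%N && (Y kk s != 0)].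
case: (pickP P) => [s1 hs1 | hnone]; last first.
  apply: keep => p s hp hs; case: (ltnP p k) => hpk; first exact: hY.
  have hpk' : p = kk by apply: val_inj => /=; apply/eqP; rewrite eqn_leq hpk -ltnS hp.
  rewrite hpk'; have := hnone s; rewrite /P /= (ltnW (leq_ltn_trans hpk hs)) /=.
  by move/negbFE/eqP.
have [s0 Ps0 hmin] : exists2 s0, P s0 & forall s, P s -> v (Y kk s0) <= v (Y kk s).
  case: (Order.TotalTheory.arg_minP (fun s => v (Y kk s)) hs1) => s0 Ps0 h.
  by exists s0.
move: (Ps0); rewrite /P /= => /andP [hks0 hYs0].
pose sg := tperm kc s0.
pose Z := Y *m perm_mx sg.
have hZ : forall p j, Z p j = Y p (sg j).
  by move=> p j; rewrite /Z perm_mx_col /sg tpermV.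
have sgk : forall j : 'I_m, (k <= j)%N -> (k <= sg j)%N.
  by move=> j hj; rewrite /sg; case: tpermP => // ->.
have sglt : forall j : 'I_m, (j < k)%N -> sg j = j.
  move=> j hj; rewrite /sg; case: tpermP => // h; move: hj; rewrite h ?ltnn //.
  by rewrite ltnNge hks0.
have hZkc : Z kk kc = Y kk s0 by rewrite hZ /sg tpermL.
pose c j := Z kk j / Z kk kc.
have hc : forall j : 'I_m, (k < j)%N -> ordge v (c j) 0.
  move=> j hj; rewrite /c hZkc; apply: ordge_div => //.
  rewrite hZ; case: (eqVneq (Y kk (sg j)) 0) => [->|hnz]; first exact: ordge0.
  rewrite /ordge (negbTE hnz) /=; apply: hmin; rewrite /P /= hnz andbT sgk //.
  exact: ltnW.
pose H := \matrix_(i, j) (((i == kc) && (k < j)%N)%:R * c j) : 'M[F]_m.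
exists (V *m perm_mx sg *m (1%:M - H)).
split.
  apply: inGLoM; first by apply: inGLoM => //; exact: inGLo_perm.
  split.
    move=> i j; rewrite !mxE; apply: ordgeD.
      by case: (i == j); rewrite /= ?mulr1n ?mulr0n; [exact: ordge1 | exact: ordge0].
    apply: ordgeN; case: (boolP ((i == kc) && (k < j)%N)) => [/andP [_ hj]|_].
      by rewrite mul1r; exact: hc.
    by rewrite mul0r; exact: ordge0.
  rewrite -det_tr det_trig; last first.
    apply/is_trig_mxP => i j hij; rewrite !mxE.
    have -> : (j == i) = false by apply/negbTE; rewrite neq_ltn hij orbT.
    case: (eqVneq j kc) => [hj|]; last by rewrite andFb mul0r subrr.
    have -> : (k < i)%N = false.
      by apply/negbTE; rewrite -leqNgt; move: hij; rewrite hj /= => /ltnW.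
    by rewrite mul0r subrr.
  rewrite big1 => [|i _]; first by rewrite /isunit oner_neq0 v1.
  rewrite !mxE eqxx.
  case: (eqVneq i kc) => [->|]; last by rewrite andFb mul0r subr0.
  by rewrite ltnn andbF mul0r subr0.
move=> p s hp hs.
rewrite !mulmxA -/Y -/Z mulmxBr mulmx1.
have -> : (Z - Z *m H) p s = Z p s - (Z *m H) p s.
  by rewrite [LHS]mxE [X in _ + X = _]mxE.
have -> : (Z *m H) p s = Z p kc * H kc s.
  rewrite [LHS]mxE (bigD1 kc) //= big1 ?addr0 // => i hi.
  by rewrite [H i s]mxE (negbTE hi) andFb mul0r mulr0.
rewrite [H kc s]mxE eqxx andTb.
case: (ltnP p k) => hpk.
  have -> : Z p kc = 0 by rewrite hZ /sg tpermL; apply: hY => //; exact: (leq_trans hpk hks0).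
  rewrite mul0r subr0 hZ; apply: hY => //.
  case: (ltnP s k) => hsk; first by rewrite sglt.
  exact: (leq_trans hpk (sgk _ hsk)).
have hpk' : p = kk by apply: val_inj => /=; apply/eqP; rewrite eqn_leq hpk -ltnS hp.
have hks : (k < s)%N by move: hs; rewrite hpk'.
rewrite hks mul1r hpk' /c mulrC divfK ?subrr // hZkc //.
Qed.


Lemma ordge2_half x (m : int) : ordge2 v x (m + m) -> ordge v x m.
Proof.
rewrite /ordge2 /ordge => /orP [->//|h]; apply/orP; right.
move: h; rewrite mulr_natl mulr2n; apply: contraLR; rewrite -!ltNge => h.
exact: ltrD.
Qed.

Lemma ord_neq_lt N (p q : 'I_N) : ((p != q) && (p < q)%N) = (p < q)%N.
Proof.
rewrite -(inj_eq val_inj) /=; case: ltngtP => //.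
Qed.

Lemma ord_neq_gt N (p q : 'I_N) : ((p != q) && ~~ (p < q)%N) = (q < p)%N.
Proof.
rewrite -(inj_eq val_inj) /=; case: ltngtP => //.
Qed.

Lemma sum_pair N (f : 'I_N -> 'I_N -> F) :
  \sum_(q : 'I_N) \sum_(p : 'I_N) f p q = \sum_(p : 'I_N) f p p + \sum_(q : 'I_N) \sum_(p : 'I_N | (p < q)%N) (f p q + f q p).
Proof.
have e1 : forall q : 'I_N, \sum_(p : 'I_N) f p q =
   \sum_(p : 'I_N | (p < q)%N) f p q + f q q + \sum_(p : 'I_N | (q < p)%N) f p q.
  move=> q; rewrite (bigD1 q) //= (bigID (fun p : 'I_N => (p < q)%N)) /=.
  under eq_bigl => p do rewrite ord_neq_lt.
  under [X in _ + (_ + X)]eq_bigl => p do rewrite ord_neq_gt.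
  by rewrite addrCA addrA.
have e3 : \sum_(q : 'I_N) \sum_(p : 'I_N | (q < p)%N) f p q = \sum_(q : 'I_N) \sum_(p : 'I_N | (p < q)%N) f q p.
  under eq_bigr do rewrite big_mkcond.
  rewrite exchange_big; apply: eq_bigr => q _.
  by rewrite [RHS]big_mkcond.
have e4 : \sum_(q : 'I_N) \sum_(p : 'I_N | (p < q)%N) (f p q + f q p) =
  \sum_(q : 'I_N) \sum_(p : 'I_N | (p < q)%N) f p q + \sum_(q : 'I_N) \sum_(p : 'I_N | (p < q)%N) f q p.
  by rewrite -big_split; apply: eq_bigr => q _; rewrite big_split.
rewrite (eq_bigr _ (fun q _ => e1 q)) big_split /= big_split /= e3 e4.
ring.
Qed.

Lemma inS_transform n n1 (B' : 'M[F]_n) (Y : 'M[F]_(n, n1)) a :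
  (n1 <= n)%N -> B'^T = B' -> inS v B' a -> mxO Y ->
  (forall (p : 'I_n) (s : 'I_n1), (p < s)%N -> Y p s = 0) ->
  inS v (Y^T *m B' *m Y) (take n1 a).
Proof.
move=> hn hsym [hsz hsrt hS] hYo hY.
have hB : forall p q, B' q p = B' p q.
  by move=> p q; rewrite -{1}hsym mxE.
have mono : forall p q : nat, (p <= q)%N -> (q < n)%N -> (nth 0%N a p <= nth 0%N a q)%N.
  move=> p q hpq hq; apply: (sorted_leq_nth leq_trans leqnn 0%N hsrt) => //;
  rewrite inE hsz //; exact: (leq_ltn_trans hpq hq).
have hB2 : forall p q : 'I_n, ordge2 v (2 * B' p q) ((nth 0%N a p)%:Z + (nth 0%N a q)%:Z).
  move=> p q; case: (leqP p q) => hpq; first by case: (hS p q hpq).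
  by rewrite hB addrC; case: (hS q p (ltnW hpq)).
have hYz : forall (p : 'I_n) (s : 'I_n1), Y p s = 0 \/ (s <= p)%N.
  move=> p s; case: (ltnP p s) => h; [left; exact: hY | by right].
have expand : forall i j, (Y^T *m B' *m Y) i j = \sum_q \sum_p (Y p i * B' p q * Y q j).
  move=> i j; rewrite !mxE; apply: eq_bigr => q _; rewrite !mxE mulr_suml.
  by apply: eq_bigr => p _; rewrite mxE.
split.
- by rewrite size_takel // hsz.
- exact: take_sorted.
move=> i j hij; rewrite !nth_take //.
have hi := ltn_ord i; have hj := ltn_ord j.
split.
  rewrite expand sum_pair; apply: ordgeD.
    apply: ordge_sum => p _.
    case: (hYz p i) => [->|hip]; first by rewrite !mul0r; exact: ordge0.
    have := hS p p (leqnn _); case=> hpp _.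
    have h1 := ordgeM (ordgeM0 (hYo p i) (hYo p i)) hpp.
    rewrite add0r in h1.
    rewrite (_ : Y p i * B' p p * Y p i = Y p i * Y p i * B' p p); last by ring.
    apply: ordgeW h1; rewrite lez_nat; apply: mono => //.
  apply: ordge_sum => q _; apply: ordge_sum => p hpq.
  have -> : Y p i * B' p q * Y q i + Y q i * B' q p * Y p i =
            Y p i * Y q i * (2 * B' p q).
    rewrite (hB p q); ring.
  case: (hYz p i) => [->|hip]; first by rewrite !mul0r; exact: ordge0.
  case: (hYz q i) => [->|hiq]; first by rewrite mulr0 !mul0r; exact: ordge0.
  have h2 : ordge v (2 * B' p q) (nth 0%N a i)%:Z.
    apply: ordge2_half; apply: (ordge2W _ (hB2 p q)).
    by rewrite lerD // lez_nat; apply: mono.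
  have h1 := ordgeM (ordgeM0 (hYo p i) (hYo q i)) h2.
  by rewrite add0r in h1.
rewrite expand mulr_sumr; apply: ordge2_sum => q _.
rewrite mulr_sumr; apply: ordge2_sum => p _.
have -> : 2 * (Y p i * B' p q * Y q j) = (2 * B' p q) * (Y p i * Y q j) by ring.
case: (hYz p i) => [->|hip]; first by rewrite !mul0r mulr0 /ordge2 eqxx.
case: (hYz q j) => [->|hjq]; first by rewrite !mulr0 /ordge2 eqxx.
have h1 := ordge2M (hB2 p q) (ordgeM0 (hYo p i) (hYo q j)).
rewrite mulr0 addr0 in h1; apply: (ordge2W _ h1).
by rewrite lerD // lez_nat; apply: mono => //; exact: ltn_ord.
Qed.


Lemma SS_block n n1 (h : (n1 <= n)%N) (B : 'M[F]_n) (B1 : 'M[F]_n1) a :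
  B^T = B -> (forall i j : 'I_n1, B1 i j = B (widen_ord h i) (widen_ord h j)) ->
  SS v B a -> SS v B1 (take n1 a).
Proof.
move=> hsym hB1e [U [hU hS]].
pose E : 'M[F]_(n, n1) := \matrix_(i, j) (i == widen_ord h j)%:R.
have hE : mxO E by apply: mxO_nat => i j; rewrite mxE; eexists.
pose X := invmx U *m E.
have hX : mxO X := mxO_mul (inv_o hU) hE.
have [V [hV hY0]] := echelon hX n1.
exists V; split => //.
have hUX : U *m X = E.
  rewrite /X mulmxA mulmxV ?mul1mx // unitmxE unitfE.
  by case: hU => _ /andP [].
have hEr : forall p (M : 'M[F]_(p, n)) i j, (M *m E) i j = M i (widen_ord h j).
  move=> p M i j; rewrite mxE (bigD1 (widen_ord h j)) //= big1 => [|k hk].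
    by rewrite mxE eqxx mulr1 addr0.
  by rewrite mxE (negbTE hk) mulr0.
have hEl : forall p (M : 'M[F]_(n, p)) i j, (E^T *m M) i j = M (widen_ord h i) j.
  move=> p M i j; rewrite mxE (bigD1 (widen_ord h i)) //= big1 => [|k hk].
    by rewrite !mxE eqxx mul1r addr0.
  by rewrite !mxE (negbTE hk) mul0r.
have hB1 : B1 = E^T *m B *m E.
  by apply/matrixP => i j; rewrite hEr hEl hB1e.
have key : V^T *m B1 *m V = (X *m V)^T *m (U^T *m B *m U) *m (X *m V).
  by rewrite hB1 -hUX !trmx_mul !mulmxA.
rewrite key; apply: inS_transform.
- exact: h.
- by rewrite !trmx_mul trmxK hsym !mulmxA.
- exact hS.
- by case: hV => hV1 _; exact: (mxO_mul hX hV1).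
move=> p s hps; apply: hY0 => //.
exact: (ltn_trans hps (ltn_ord s)).
Qed.

End Val.

Lemma lexle_cat (s b t : seq nat) : lexle (s ++ b) t -> lexle s (take (size s) t).
Proof.
elim: s t => [|x s IH] [|y t] //=.
case/orP => [->//|/andP [/eqP -> h]]; by rewrite ltnn eqxx /= IH.
Qed.

Lemma lexle_anti (s t : seq nat) : size s = size t -> lexle s t -> lexle t s -> s = t.
Proof.
elim: s t => [|x s IH] [|y t] //= [hsz] /orP [h1|/andP [/eqP e1 h1]] /orP [h2|/andP [/eqP e2 h2]].
- by move: (ltn_trans h1 h2); rewrite ltnn.
- by move: h1; rewrite e2 ltnn.
- by move: h2; rewrite e1 ltnn.
- by rewrite e1 (IH t).
Qed.

Lemma bent_sym (F : fieldType) (b : blk F) i j : bent b i j = bent b j i.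
Proof.
by case: b => [k u|k a b0 c] /=; rewrite eq_sym; case: eqP => // ->.
Qed.

Lemma ent_sym (F : fieldType) (bs : seq (blk F)) i j : ent bs i j = ent bs j i.
Proof.
elim: bs i j => [|b bs IH] i j //=.
by rewrite andbC bent_sym [((_ <= j) && _)%N]andbC IH.
Qed.

Lemma ent_take (F : fieldType) (bs : seq (blk F)) k i j :
  (i < degs (take k bs))%N -> (j < degs (take k bs))%N -> ent (take k bs) i j = ent bs i j.
Proof.
elim: bs k i j => [|b bs IH] [|k] i j //=.
rewrite /degs /= -/(degs _) => hi hj.
case: ifP => // _; case: ifP => // /andP [h1 h2].
apply: IH; lia.
Qed.

Lemma degs_take_le (F : fieldType) (bs : seq (blk F)) k : (degs (take k bs) <= degs bs)%N.
Proof.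
by rewrite -{2}(cat_take_drop k bs) /degs map_cat sumn_cat leq_addr.
Qed.

Theorem lemma2p1 (F : fieldType) (v : F -> int) (HF : dyadic_field v)
  (bs : seq (blk F)) (Hr : (0 < size bs)%N) (Hpo : preoptimal v bs)
  (g g1 : seq nat)
  (Hg : isGK v (mxOf bs) g)
  (Hg1 : isGK v (mxOf (take (size bs).-1 bs)) g1) :
  lexle (take (degs (take (size bs).-1 bs)) g) g1 /\
  ((exists b : seq nat, SS v (mxOf bs) (g1 ++ b)) ->
     g1 = take (degs (take (size bs).-1 bs)) g).
Proof.
set n1 := degs (take (size bs).-1 bs).
have hn : (n1 <= degs bs)%N by exact: degs_take_le.
case: Hg => hSS hmax; case: Hg1 => hSS1 hmax1.
have hsym : (mxOf bs)^T = mxOf bs by apply/matrixP => i j; rewrite !mxE ent_sym.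
have hb : SS v (mxOf (take (size bs).-1 bs)) (take n1 g).
  refine (@SS_block F v HF _ _ hn _ _ _ hsym _ hSS) => i j.
  by rewrite !mxE /= ent_take.
have h1 := hmax1 _ hb.
split => // -[b hb2].
have h2 := hmax _ hb2.
have hsz1 : size g1 = n1 by case: hSS1 => U [_ [hs _ _]].
have hszg : size g = degs bs by case: hSS => U [_ [hs _ _]].
apply: lexle_anti => //.
  by rewrite size_takel // hszg.
by rewrite -hsz1; exact: (lexle_cat h2).
Qed.
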